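(* Let $(\mathcal C_n)_{n\in\mathbb N_0}$ be a sequence of $\sigma$-subfields with $\mathcal C_n\to\mathcal C_0$ strongly as $n\to\infty$. Let $I$ be an arbitrary index set and let $(\mathcal B_n^i)_{(n,i)\in\mathbb N_0\times I}$ be $\sigma$-subfields such that, for each $i\in I$, $\mathcal B_n^i\to\mathcal B_0^i$ weakly as $n\to\infty$, and such that, for each $n\in\mathbb N$, the family $(\mathcal B_n^i)_{i\in I}$ is conditionally independent given $\mathcal C_n$ (under $\mathbb P$). Then the family $(\mathcal B_0^i)_{i\in I}$ is conditionally independent given $\mathcal C_0$.
   Context: Let $(\Omega,\mathcal F,\mathbb P)$ be a (not necessarily complete) probability space and $\mathcal N:=\{F\in\mathcal F:\mathbb P(F)=0\}$. A $\sigma$-subfield is a sub-$\sigma$-field $\mathcal A\subset\mathcal F$ which is $\mathbb P$-complete, i.e. $\mathcal A=\sigma(\mathcal A\cup\mathcal N)$. For a $\sigma$-subfield $\mathcal A$ and integrable $f$, $\mathbb P_{\mathcal A}f:=\mathbb E^{\mathbb P}[f\mid\mathcal A]$. For $\sigma$-subfields $(\mathcal B_n)_{n\in\mathbb N_0}$: $\mathcal B_n\to\mathcal B_0$ weakly if $\mathbb P_{\mathcal B_n}\mathbb 1_A\to\mathbb 1_A$ in $\mathbb P$-probability for every $A\in\mathcal B_0$; $\mathcal B_n\to\mathcal B_0$ strongly if $\mathbb P_{\mathcal B_n}\mathbb 1_A\to\mathbb P_{\mathcal B_0}\mathbb 1_A$ in $\mathbb P$-probability for every $A\in\mathcal F$.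 *)

(* Defs.v *)
From HB Require Import structures.
From mathcomp Require Import all_boot all_order all_algebra.
From mathcomp Require Import all_classical all_reals all_analysis.
Set Implicit Arguments. Unset Strict Implicit. Unset Printing Implicit Defensive.
Import Order.TTheory GRing.Theory Num.Theory.
Import numFieldNormedType.Exports.
Local Open Scope classical_set_scope.
Local Open Scope ring_scope.

Section condexp_defs.
Context {d : measure_display} {T : measurableType d} {R : realType}.
Variable P : probability T R.

Definition Pnull : set (set T) := [set N | measurable N /\ P N = 0%E].

(* sigma-subfield: sub-sigma-field of F which is P-complete, A = sigma(A u N) *)
Definition sigma_subfield (A : set (set T)) : Prop :=
  A `<=` measurable /\ A = <<s A `|` Pnull >>.

Definition sub_measurable (A : set (set T)) (g : T -> R) : Prop :=
  forall Y : set R, measurable Y -> A (g @^-1` Y).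

Definition is_condexp (A : set (set T)) (f g : T -> R) : Prop :=
  [/\ sub_measurable A g, P.-integrable setT (EFin \o g) &
      forall B, A B -> (\int[P]_(x in B) (g x)%:E = \int[P]_(x in B) (f x)%:E)%E].

(* P_A f : a (choice of) version of the conditional expectation;
   0 if no version exists (never happens for integrable f) *)
Definition condexp (A : set (set T)) (f : T -> R) : T -> R :=
  xget (fun _ => 0) [set g | is_condexp A f g].

Definition cvg_in_prob (g : nat -> T -> R) (f : T -> R) : Prop :=
  forall eps : R, 0 < eps ->
    (fun n => P [set x | eps <= `|g n x - f x|]) @ \oo --> 0%E.

Definition weak_cvg (B : nat -> set (set T)) (B0 : set (set T)) : Prop :=
  forall A, B0 A -> cvg_in_prob (fun n => condexp (B n) \1_A) \1_A.

Definition strong_cvg (B : nat -> set (set T)) (B0 : set (set T)) : Prop :=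
  forall A, measurable A ->
    cvg_in_prob (fun n => condexp (B n) \1_A) (condexp B0 \1_A).

(* conditional independence of (B i)_{i in I} given C: for every finite
   subfamily, enumerated injectively by j : 'I_k -> I, and every choice of
   events S m in B (j m), P_C 1_{cap S} = prod P_C 1_{S m} a.s. *)
Definition cond_indep (I : Type) (B : I -> set (set T)) (C : set (set T)) : Prop :=
  forall (k : nat) (j : 'I_k -> I), injective j ->
  forall S : 'I_k -> set T, (forall m, B (j m) (S m)) ->
  {ae P, forall x, condexp C \1_(\bigcap_(m in [set: 'I_k]) S m) x
                   = \prod_(m < k) condexp C \1_(S m) x}.

End condexp_defs.

(* Main.v *)
Require Import Defs.
From HB Require Import structures.
From mathcomp Require Import all_boot all_order all_algebra.
From mathcomp Require Import all_classical all_reals all_analysis.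
From mathcomp Require Import measurable_realfun.
From mathcomp Require Import ring lra.
Set Implicit Arguments. Unset Strict Implicit. Unset Printing Implicit Defensive.
Import Order.TTheory GRing.Theory Num.Theory.
Import numFieldNormedType.Exports.
Local Open Scope classical_set_scope.
Local Open Scope ring_scope.

Section cip.
Context {d} {T : measurableType d} {R : realType} (P : probability T R).

Lemma mset_le (h : T -> R) (e : R) : measurable_fun setT h ->
  measurable [set x | e <= `|h x|].
Proof.
move=> mh.
rewrite (_ : [set x | e <= `|h x|] = setT `&` (fun x => `|h x|) @^-1` `[e, +oo[).
  exact: (measurableT_comp (@normr_measurable R setT) mh) measurableT _ (measurable_itv _).
by apply/seteqP; split => x /=; rewrite ?in_itv /= ?andbT; [move=> ?; split|case].
Qed.
Lemma dummy : True. Proof. by [].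
Qed.

Lemma squeeze0 (u v : nat -> \bar R) : (forall n, (0 <= u n)%E) ->
  (\forall n \near \oo, (u n <= v n)%E) -> v @ \oo --> 0%E -> u @ \oo --> 0%E.
Proof.
move=> u0 uv v0; apply: (@squeeze_cvge _ _ _ _ (cst 0%E) _ v) => //.
  by apply: filterS uv => n ->; rewrite u0.
exact: cvg_cst.
Qed.

Lemma cip_add (u v : nat -> T -> R) (f g : T -> R) :
  (forall n, measurable_fun setT (u n)) -> (forall n, measurable_fun setT (v n)) ->
  measurable_fun setT f -> measurable_fun setT g ->
  cvg_in_prob P u f -> cvg_in_prob P v g ->
  cvg_in_prob P (fun n x => u n x + v n x) (fun x => f x + g x).
Proof.
move=> mu mv mf mg cu cv e e0.
have e20 : 0 < e / 2 by rewrite divr_gt0.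
apply: (squeeze0 (v := fun n => (P [set x | e / 2 <= `|u n x - f x|] +
   P [set x | e / 2 <= `|v n x - g x|]))) => //.
- apply: nearW => n.
  apply: le_trans (measureU2 _ _ _); last 2 first.
    by apply: mset_le; apply: measurable_funB.
    by apply: mset_le; apply: measurable_funB.
  apply: le_measure; rewrite ?inE.
  + by apply: mset_le; apply: measurable_funB => //; apply: measurable_funD.
  + by apply: measurableU; apply: mset_le; apply: measurable_funB.
  move=> x /= hx; case: (leP (e / 2) `|u n x - f x|) => h1; first by left.
  right; case: (leP (e / 2) `|v n x - g x|) => h2 //; exfalso.
  move: hx; apply/negP; rewrite -ltNge.
  rewrite (_ : _ - _ = (u n x - f x) + (v n x - g x)); last by ring.
  apply: le_lt_trans (ler_normD _ _) _.
  by rewrite (splitr e) ltrD.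
- by rewrite -(adde0 0%E); apply: cvgeD => //; [exact: cu | exact: cv].
Qed.


Lemma cip_ext (u u' : nat -> T -> R) (f f' : T -> R) :
  (forall n x, u n x = u' n x) -> (forall x, f x = f' x) ->
  cvg_in_prob P u f -> cvg_in_prob P u' f'.
Proof.
move=> uu ff; have -> : u' = u by apply/funext => n; apply/funext => x.
by have -> : f' = f by apply/funext => x.
Qed.

Lemma cip_ae (u v : nat -> T -> R) (f : T -> R) :
  (forall n, measurable_fun setT (u n)) -> (forall n, measurable_fun setT (v n)) ->
  measurable_fun setT f ->
  (forall n, (0 < n)%N -> {ae P, forall x, u n x = v n x}) ->
  cvg_in_prob P u f -> cvg_in_prob P v f.
Proof.
move=> mu mv mf uv cu e e0.
apply: (squeeze0 (v := fun n => P [set x | e <= `|u n x - f x|])) => //.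
- exists 1%N => // n /= n1; have [N [mN N0 sub]] := uv n n1.
  apply: (@le_trans _ _ (P ([set x | e <= `|u n x - f x|] `|` N))).
    apply: le_measure; rewrite ?inE.
    + by apply: mset_le; apply: measurable_funB.
    + by apply: measurableU => //; apply: mset_le; apply: measurable_funB.
    move=> x /= hx; have [E|E] := pselect (u n x = v n x).
      by left; rewrite E.
    by right; apply: sub.
  apply: le_trans (measureU2 _ _ _) _ => //.
    by apply: mset_le; apply: measurable_funB.
  by rewrite [X in (_ + X)%E]N0 adde0.
- exact: cu.
Qed.

Lemma setne_bigcup (f g : T -> R) : [set x | f x != g x] =
  \bigcup_n [set x | n.+1%:R^-1 <= `|f x - g x|].
Proof.
apply/seteqP; split => x /=.
- rewrite -subr_eq0 => hx; have hx0 : 0 < `|f x - g x| by rewrite normr_gt0.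
  have [n hn] := ltr_add_invr hx0.
  by exists n => //=; rewrite add0r in hn; exact: ltW.
- move=> [n _ hn]; apply/eqP => E; move: hn; rewrite /= E subrr normr0.
  by rewrite leNgt invr_gt0 ltr0n.
Qed.


Lemma cip_uniq (u : nat -> T -> R) (f g : T -> R) :
  (forall n, measurable_fun setT (u n)) ->
  measurable_fun setT f -> measurable_fun setT g ->
  cvg_in_prob P u f -> cvg_in_prob P u g -> {ae P, forall x, f x = g x}.
Proof.
move=> mu mf mg cf cg.
have key n : P [set x | n.+1%:R^-1 <= `|f x - g x|] = 0%E.
  set e := n.+1%:R^-1; have e0 : 0 < e by rewrite invr_gt0.
  have e20 : 0 < e / 2 by rewrite divr_gt0.
  have H : (fun _ : nat => P [set x | e <= `|f x - g x|]) @ \oo --> 0%E.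
    apply: (squeeze0 (v := fun n => (P [set x | e / 2 <= `|u n x - f x|] +
        P [set x | e / 2 <= `|u n x - g x|]))) => //.
    - apply: nearW => k.
      apply: le_trans (measureU2 _ _ _); last 2 first.
        by apply: mset_le; apply: measurable_funB.
        by apply: mset_le; apply: measurable_funB.
      apply: le_measure; rewrite ?inE.
      + by apply: mset_le; apply: measurable_funB.
      + by apply: measurableU; apply: mset_le; apply: measurable_funB.
      move=> x /= hx; case: (leP (e / 2) `|u k x - f x|) => h1; first by left.
      right; case: (leP (e / 2) `|u k x - g x|) => h2 //; exfalso.
      move: hx; apply/negP; rewrite -ltNge.
      rewrite (_ : _ - _ = - (u k x - f x) + (u k x - g x)); last by ring.
      apply: le_lt_trans (ler_normD _ _) _.
      by rewrite normrN (splitr e) ltrD.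
    - by rewrite -(adde0 0%E); apply: cvgeD => //; [exact: cf | exact: cg].
  by move/cvg_lim : H => /(_ (@ereal_hausdorff R)); rewrite lim_cst.
change (P.-negligible (~` [set x | f x = g x])).
have -> : ~` [set x | f x = g x] = [set x | f x != g x].
  by apply/seteqP; split => x /=; move/eqP.
rewrite setne_bigcup; apply: negligible_bigcup => n.
exists [set x | n.+1%:R^-1 <= `|f x - g x|]; split => //; last exact: key.
by apply: mset_le; apply: measurable_funB.
Qed.


Definition bnd (f : T -> R) := P [set x | 1 < `|f x|] = 0%E.

Lemma mset_lt (h : T -> R) (e : R) : measurable_fun setT h ->
  measurable [set x | e < `|h x|].
Proof.
move=> mh.
rewrite (_ : [set x | e < `|h x|] = setT `&` (fun x => `|h x|) @^-1` `]e, +oo[).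
  exact: (measurableT_comp (@normr_measurable R setT) mh) measurableT _ (measurable_itv _).
by apply/seteqP; split => x /=; rewrite ?in_itv /= ?andbT; [move=> ?; split|case].
Qed.

Lemma measureU2_le (A B : set T) : measurable A -> measurable B ->
  (P (A `|` B) <= P A + P B)%E.
Proof. by move=> mA mB; apply: measureU2. Qed.

Lemma bnd_mul (f g : T -> R) : measurable_fun setT f -> measurable_fun setT g ->
  bnd f -> bnd g -> bnd (fun x => f x * g x).
Proof.
move=> mf mg bf bg; rewrite /bnd; apply/eqP; rewrite -measure_le0.
apply: (@le_trans _ _ (P ([set x | 1 < `|f x|] `|` [set x | 1 < `|g x|]))).
  apply: le_measure; rewrite ?inE.
  - by apply: mset_lt; apply: measurable_funM.
  - by apply: measurableU; apply: mset_lt.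
  move=> x /= hx; case: (leP `|f x| 1) => h1; last by left.
  right; case: (leP `|g x| 1) => h2 //; exfalso; move: hx; apply/negP.
  rewrite -leNgt normrM -[1]mulr1; apply: ler_pM => //.
apply: le_trans (measureU2_le _ _) _; try by apply: mset_lt.
by rewrite [X in (X + _)%E]bf [X in (_ + X)%E]bg adde0.
Qed.

Lemma cip_mul (u v : nat -> T -> R) (f g : T -> R) :
  (forall n, measurable_fun setT (u n)) -> (forall n, measurable_fun setT (v n)) ->
  measurable_fun setT f -> measurable_fun setT g ->
  (forall n, bnd (v n)) -> bnd f ->
  cvg_in_prob P u f -> cvg_in_prob P v g ->
  cvg_in_prob P (fun n x => u n x * v n x) (fun x => f x * g x).
Proof.
move=> mu mv mf mg bv bf cu cv e e0.
have e20 : 0 < e / 2 by rewrite divr_gt0.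
apply: (squeeze0 (v := fun n => (P [set x | e / 2 <= `|u n x - f x|] +
   P [set x | e / 2 <= `|v n x - g x|]))) => //.
- apply: nearW => n.
  have m1 : measurable [set x | e / 2 <= `|u n x - f x|].
    by apply: mset_le; apply: measurable_funB.
  have m2 : measurable [set x | e / 2 <= `|v n x - g x|].
    by apply: mset_le; apply: measurable_funB.
  have m3 : measurable [set x | 1 < `|v n x|] by apply: mset_lt.
  have m4 : measurable [set x | 1 < `|f x|] by apply: mset_lt.
  apply: (@le_trans _ _ (P (([set x | e / 2 <= `|u n x - f x|] `|`
     [set x | e / 2 <= `|v n x - g x|]) `|` ([set x | 1 < `|v n x|] `|`
     [set x | 1 < `|f x|])))).
    apply: le_measure; rewrite ?inE.
    + by apply: mset_le; apply: measurable_funB => //; apply: measurable_funM.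
    + by apply: measurableU; apply: measurableU.
    move=> x /= hx; case: (leP `|v n x| 1) => hv; last by right; left.
    case: (leP `|f x| 1) => hf; last by right; right.
    left; case: (leP (e / 2) `|u n x - f x|) => h1; first by left.
    right; case: (leP (e / 2) `|v n x - g x|) => h2 //; exfalso.
    move: hx; apply/negP; rewrite -ltNge.
    rewrite (_ : _ - _ = (u n x - f x) * v n x + f x * (v n x - g x)); last by ring.
    apply: le_lt_trans (ler_normD _ _) _; rewrite !normrM (splitr e).
    apply: ltrD.
    + apply: le_lt_trans h1; rewrite -[leRHS]mulr1; apply: ler_pM => //.
    + apply: le_lt_trans h2; rewrite -[leRHS]mul1r; apply: ler_pM => //.
  apply: le_trans (measureU2_le _ _) _; [exact: measurableU|exact: measurableU|].
  apply: le_trans (leeD (le_refl _) (measureU2_le _ _)) _ => //.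
  rewrite [X in (_ + (X + _))%E]bv [X in (_ + (_ + X))%E]bf adde0 adde0.
  exact: measureU2_le.
- by rewrite -(adde0 0%E); apply: cvgeD => //; [exact: cu | exact: cv].
Qed.


Lemma mprod k (h : 'I_k -> T -> R) : (forall m, measurable_fun setT (h m)) ->
  measurable_fun setT (fun x => \prod_(m < k) h m x).
Proof. by move=> mh; apply: measurable_prod => m _; exact: mh. Qed.

Lemma cip_prod k (a : nat -> 'I_k -> T -> R) (b : 'I_k -> T -> R) :
  (forall n m, measurable_fun setT (a n m)) -> (forall m, measurable_fun setT (b m)) ->
  (forall n m, bnd (a n m)) -> (forall m, bnd (b m)) ->
  (forall m, cvg_in_prob P (fun n => a n m) (b m)) ->
  [/\ cvg_in_prob P (fun n x => \prod_(m < k) a n m x) (fun x => \prod_(m < k) b m x),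
   (forall n, bnd (fun x => \prod_(m < k) a n m x)) &
   bnd (fun x => \prod_(m < k) b m x)].
Proof.
elim: k a b => [|k IH] a b ma mb ba bb cab.
  have E : [set x : T | 1 < `|\prod_(m < 0) b m x|] = set0.
    by apply/seteqP; split => x //=; rewrite big_ord0 normr1 ltxx.
  split.
  - move=> e e0; rewrite [X in X @ _ --> _](_ : _ = cst 0%E); first exact: cvg_cst.
    apply/funext => n /=.
    rewrite (_ : [set x | _] = set0) ?measure0 //.
    apply/seteqP; split => x //=; rewrite !big_ord0 subrr normr0.
    by rewrite leNgt e0.
  - move=> n; rewrite /bnd (_ : [set x | _] = set0) ?measure0 //.
    by apply/seteqP; split => x //=; rewrite big_ord0 normr1 ltxx.
  - by rewrite /bnd E measure0.
pose a' n (m : 'I_k) := a n (widen_ord (leqnSn k) m).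
pose b' (m : 'I_k) := b (widen_ord (leqnSn k) m).
have [c1 c2 c3] := IH a' b' (fun n m => ma n _) (fun m => mb _)
  (fun n m => ba n _) (fun m => bb _) (fun m => cab _).
have Ea n x : \prod_(m < k.+1) a n m x = (\prod_(m < k) a' n m x) * a n ord_max x.
  by rewrite big_ord_recr.
have Eb x : \prod_(m < k.+1) b m x = (\prod_(m < k) b' m x) * b ord_max x.
  by rewrite big_ord_recr.
split.
- apply: (cip_ext (u := fun n x => (\prod_(m < k) a' n m x) * a n ord_max x)
    (f := fun x => (\prod_(m < k) b' m x) * b ord_max x)).
    by move=> n x; rewrite Ea.
    by move=> x; rewrite Eb.
  apply: cip_mul => //; try exact: cab.
  + by move=> n; apply: mprod => m; exact: ma.
  + by apply: mprod => m; exact: mb.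
- move=> n; rewrite /bnd (_ : [set x | _] =
      [set x | 1 < `|(\prod_(m < k) a' n m x) * a n ord_max x|]); last first.
    by apply/seteqP; split => x /=; rewrite Ea.
  apply: (bnd_mul (f := fun x => \prod_(m < k) a' n m x)) => //.
  by apply: mprod => m; exact: ma.
- rewrite /bnd (_ : [set x | _] =
      [set x | 1 < `|(\prod_(m < k) b' m x) * b ord_max x|]); last first.
    by apply/seteqP; split => x /=; rewrite Eb.
  apply: (bnd_mul (f := fun x => \prod_(m < k) b' m x)) => //.
  by apply: mprod => m; exact: mb.
Qed.

End cip.

Section exist.
Context {d} {T : measurableType d} {R : realType} (P : probability T R).
Variable A : set (set T).
Hypothesis hA : sigma_subfield P A.
Let G := A `|` Pnull P.
Local Notation Tsub := (g_sigma_algebraType G).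
Lemma measTsubE : (measurable : set (set Tsub)) = A.
Proof. by rewrite [RHS](proj2 hA). Qed.
Lemma measTsub (B : set Tsub) : measurable B -> measurable (B : set T).
Proof. by rewrite measTsubE => /(proj1 hA). Qed.

Definition musub : set Tsub -> \bar R := fun B => P B.
Let musub0 : musub set0 = 0%E. Proof. exact: measure0. Qed.
Let musub_ge0 B : (0 <= musub B)%E. Proof. exact: measure_ge0. Qed.
Let musub_sa : semi_sigma_additive musub.
Proof.
move=> F mF tF mUF; apply: (@measure_semi_sigma_additive _ _ _ P) => //.
- by move=> n; exact: measTsub.
- exact: measTsub.
Qed.
HB.instance Definition _ := isMeasure.Build _ _ _ musub musub0 musub_ge0 musub_sa.
Let musubT : musub setT = 1%E. Proof. exact: probability_setT. Qed.
HB.instance Definition _ := Measure_isProbability.Build _ _ _ musub musubT.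

Variable X : set T.
Hypothesis mX : measurable X.
Definition nusub : set Tsub -> \bar R := fun B => P (B `&` X).
Let nusub0 : nusub set0 = 0%E. Proof. by rewrite /nusub set0I measure0. Qed.
Let nusub_ge0 B : (0 <= nusub B)%E. Proof. exact: measure_ge0. Qed.
Let nusub_sa : semi_sigma_additive nusub.
Proof.
move=> F mF tF mUF; rewrite /nusub setI_bigcupl.
apply: (@measure_semi_sigma_additive _ _ _ P).
- by move=> n; apply: measurableI => //; exact: measTsub.
- apply/trivIsetP => i j _ _ ij; rewrite setIACA setIid.
  by move/trivIsetP: tF => /(_ i j I I ij) ->; rewrite set0I.
- by rewrite -setI_bigcupl; apply: measurableI => //; exact: measTsub.
Qed.
HB.instance Definition _ := isMeasure.Build _ _ _ nusub nusub0 nusub_ge0 nusub_sa.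
Let nusub_fin B : measurable B -> nusub B \is a fin_num.
Proof.
move=> mB; rewrite ge0_fin_numE ?measure_ge0 //.
apply: (le_lt_trans (probability_le1 P _)); last by rewrite ltey.
by apply: measurableI => //; exact: measTsub.
Qed.
HB.instance Definition _ := Measure_isFinite.Build _ _ _ nusub nusub_fin.

Lemma nusub_dom : nusub `<< musub.
Proof.
move=> N /= NN B mB BN; apply/eqP; rewrite -measure_le0.
rewrite -(NN B mB BN); rewrite /nusub /musub /=.
apply: le_measure; rewrite ?inE.
- by apply: measurableI => //; exact: measTsub.
- exact: measTsub.
- exact: subIsetl.
Qed.

Lemma mid_sub : measurable_fun setT (id : T -> Tsub).
Proof. by move=> _ Y mY; rewrite setTI; exact: measTsub. Qed.

Lemma integral_sub (B : set Tsub) (k : Tsub -> \bar R) : measurable B ->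
  measurable_fun B k -> (forall x, B x -> (0 <= k x)%E) ->
  (\int[musub]_(x in B) k x = \int[P]_(x in (B : set T)) k x)%E.
Proof.
move=> mB mk k0.
rewrite (@eq_measure_integral _ _ _ _ (pushforward P (id : T -> Tsub))) //;
  first exact: mid_sub.
move=> mf; rewrite (ge0_integral_pushforward mf) //.
by move=> y; rewrite inE; exact: k0.
Qed.

Definition rnsub := Radon_Nikodym_SigmaFinite.f nusub musub.
Definition gsub : T -> R := fun x => fine (rnsub x).

Lemma gsub_ge0 x : 0 <= gsub x.
Proof. by rewrite /gsub fine_ge0 // Radon_Nikodym_SigmaFinite.f_ge0 //; exact: nusub_dom. Qed.

Lemma rnsubE x : ((gsub x)%:E = rnsub x)%E.
Proof. by rewrite /gsub fineK // Radon_Nikodym_SigmaFinite.f_fin_num //; exact: nusub_dom. Qed.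

Lemma mrnsub : measurable_fun setT rnsub.
Proof. exact: (measurable_int _ (Radon_Nikodym_SigmaFinite.f_integrable nusub_dom)). Qed.

Lemma mgsub_sub : measurable_fun setT (gsub : Tsub -> R).
Proof. exact: measurableT_comp mrnsub. Qed.

Lemma gsub_condexp : is_condexp P A \1_X gsub.
Proof.
split.
- move=> Y mY; rewrite -measTsubE.
  by have := mgsub_sub measurableT mY; rewrite setTI.
- apply/integrableP; split.
    apply/measurable_EFinP => _ Y mY; rewrite setTI.
    by apply: measTsub; have := mgsub_sub measurableT mY; rewrite setTI.
  rewrite -integral_sub //; last first.
    apply: measurableT_comp => //; apply/measurable_EFinP; exact: mgsub_sub.
  under eq_integral do rewrite gee0_abs ?lee_fin ?gsub_ge0 //.
  rewrite (eq_integral rnsub); last by move=> x _; rewrite /= rnsubE.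
  rewrite -Radon_Nikodym_SigmaFinite.f_integral //; last exact: nusub_dom.
  rewrite /nusub /= (le_lt_trans (probability_le1 P _)) // ?ltey //; exact: measurableI.
- move=> B AB; have mB : measurable (B : set Tsub) by rewrite measTsubE.
  rewrite -integral_sub //; last 2 first.
    by apply/measurable_EFinP; apply: measurable_funTS; exact: mgsub_sub.
    by move=> x _; rewrite lee_fin gsub_ge0.
  rewrite (eq_integral rnsub); last by move=> x _; rewrite /= rnsubE.
  rewrite -Radon_Nikodym_SigmaFinite.f_integral //; last exact: nusub_dom.
  rewrite integral_indic //; last exact: measTsub.
  by rewrite /nusub /= setIC.
Qed.

End exist.

Lemma condexp_ex d (T : measurableType d) (R : realType) (P : probability T R)
  (A : set (set T)) (X : set T) : sigma_subfield P A -> measurable X ->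
  is_condexp P A \1_X (condexp P A \1_X).
Proof.
move=> hA mX; apply: xgetPex; exists (gsub hA mX); exact: gsub_condexp.
Qed.

Section ce.
Context {d} {T : measurableType d} {R : realType} (P : probability T R).
Variable A : set (set T).
Hypothesis hA : sigma_subfield P A.
Local Notation Tsub := (g_sigma_algebraType (A `|` Pnull P)).

Lemma subm_Tsub (g : T -> R) : sub_measurable A g -> measurable_fun [set: Tsub] g.
Proof.
move=> sg _ Y mY; rewrite setTI.
change (<<s A `|` Pnull P >> (g @^-1` Y)); rewrite -(proj2 hA); exact: sg.
Qed.

Lemma Tsub_subm (g : T -> R) : measurable_fun [set: Tsub] g -> sub_measurable A g.
Proof.
move=> mg Y mY; have := mg measurableT Y mY; rewrite setTI.
by change (<<s A `|` Pnull P >> (g @^-1` Y) -> A (g @^-1` Y)); rewrite -(proj2 hA).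
Qed.

Lemma subm_meas (g : T -> R) : sub_measurable A g -> measurable_fun setT g.
Proof. by move=> sg _ Y mY; rewrite setTI; apply: (proj1 hA); exact: sg. Qed.

Lemma subm_ge (g : T -> R) e : sub_measurable A g -> A [set x | e <= g x].
Proof.
move=> sg; rewrite (_ : [set x | e <= g x] = g @^-1` `[e, +oo[).
  exact: sg.
by apply/seteqP; split => x /=; rewrite in_itv /= andbT.
Qed.

Lemma subm_le (g : T -> R) e : sub_measurable A g -> A [set x | g x <= e].
Proof.
move=> sg; rewrite (_ : [set x | g x <= e] = g @^-1` `]-oo, e]).
  exact: sg.
by apply/seteqP; split => x /=; rewrite in_itv /=.
Qed.

Lemma subm_gt (g : T -> R) e : sub_measurable A g -> A [set x | e < g x].
Proof.
move=> sg; rewrite (_ : [set x | e < g x] = g @^-1` `]e, +oo[).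
  exact: sg.
by apply/seteqP; split => x /=; rewrite in_itv /= andbT.
Qed.

Lemma subm_B (f g : T -> R) : sub_measurable A f -> sub_measurable A g ->
  sub_measurable A (fun x => f x - g x).
Proof.
move=> sf sg; apply: Tsub_subm; apply: measurable_funB; exact: subm_Tsub.
Qed.

Variables X Y : set T.
Hypotheses (mX : measurable X) (mY : measurable Y).
Local Notation cX := (condexp P A \1_X).
Local Notation cY := (condexp P A \1_Y).

Lemma ce_sub : sub_measurable A cX.
Proof. by have [] := condexp_ex hA mX. Qed.
Lemma ce_meas : measurable_fun setT cX.
Proof. exact: subm_meas ce_sub. Qed.
Lemma ce_int : P.-integrable setT (EFin \o cX).
Proof. by have [] := condexp_ex hA mX. Qed.
Lemma ce_integral B : A B -> (\int[P]_(x in B) (cX x)%:E = P (X `&` B))%E.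
Proof.
move=> AB; have [_ _ ->] := condexp_ex hA mX => //.
by rewrite integral_indic //; exact: (proj1 hA).
Qed.

End ce.

Section ce2.
Context {d} {T : measurableType d} {R : realType} (P : probability T R).
Variable A : set (set T).
Hypothesis hA : sigma_subfield P A.
Variables X Y : set T.
Hypotheses (mX : measurable X) (mY : measurable Y).
Local Notation cX := (condexp P A \1_X).
Local Notation cY := (condexp P A \1_Y).

Lemma ce_diff e : 0 < e ->
  (e%:E * P [set x | (e <= cX x - cY x)%R] <= P (X `\` Y))%E.
Proof.
move=> e0; set E := [set x | e <= cX x - cY x].
have AE : A E by exact: (subm_ge _ (subm_B hA (ce_sub hA mX) (ce_sub hA mY))).
have mE : measurable E by exact: (proj1 hA).
have iX : P.-integrable E (EFin \o cX) by exact: (integrableS measurableT mE (@subsetT _ _) (ce_int hA mX)).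
have iY : P.-integrable E (EFin \o cY) by exact: (integrableS measurableT mE (@subsetT _ _) (ce_int hA mY)).
have ic : P.-integrable E (EFin \o cst e) by apply: finite_measure_integrable_cst.
have fY : (\int[P]_(x in E) (cY x)%:E)%E \is a fin_num.
  by rewrite ce_integral // fin_num_measure //; apply: measurableI.
rewrite -(leeD2lE _ _ fY).
apply: (@le_trans _ _ (\int[P]_(x in E) ((cY x)%:E + (cst e x)%:E))%E).
  rewrite integralD // (_ : \int[P]_(x in E) (cst e x)%:E = e%:E * P E)%E.
    by rewrite muleC.
  by rewrite -(integral_cst P mE e%:E); apply: eq_integral.
apply: (@le_trans _ _ (\int[P]_(x in E) (cX x)%:E)%E).
  apply: le_integral => //; first exact: integrableD.
  by move=> x; rewrite inE /E /= -EFinD lee_fin => h; rewrite -lerBrDl.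
rewrite !ce_integral //.
apply: (@le_trans _ _ (P ((Y `&` E) `|` (X `\` Y)))).
  apply: le_measure; rewrite ?inE.
  - exact: measurableI.
  - by apply: measurableU; [apply: measurableI|apply: measurableD].
  move=> x [Xx Ex]; have [Yx|nYx] := pselect (Y x); first by left.
  by right.
apply: measureU2.
- exact: measurableI.
- exact: measurableD.
Qed.

End ce2.

Section ce3.
Context {d} {T : measurableType d} {R : realType} (P : probability T R).
Variable A : set (set T).
Hypothesis hA : sigma_subfield P A.
Variables X Y : set T.
Hypotheses (mX : measurable X) (mY : measurable Y).
Local Notation cX := (condexp P A \1_X).
Local Notation cY := (condexp P A \1_Y).

Lemma ce_diff_abs e : 0 < e ->
  (e%:E * P [set x | (e <= `|cX x - cY x|)%R] <= P (X `\` Y) + P (Y `\` X))%E.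
Proof.
move=> e0.
have m1 : measurable [set x | e <= cX x - cY x].
  by apply: (proj1 hA); exact: (subm_ge _ (subm_B hA (ce_sub hA mX) (ce_sub hA mY))).
have m2 : measurable [set x | e <= cY x - cX x].
  by apply: (proj1 hA); exact: (subm_ge _ (subm_B hA (ce_sub hA mY) (ce_sub hA mX))).
apply: (@le_trans _ _ (e%:E * P ([set x | (e <= cX x - cY x)%R] `|`
   [set x | (e <= cY x - cX x)%R]))%E).
  rewrite lee_pmul2l ?lte_fin //.
  apply: le_measure; rewrite ?inE.
  - by apply: mset_le; apply: measurable_funB; exact: ce_meas.
  - exact: measurableU.
  move=> x /=; rewrite ler_normr => /orP[h|h]; first by left.
  by right; rewrite opprB in h.
apply: (@le_trans _ _ (e%:E * (P [set x | (e <= cX x - cY x)%R] +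
   P [set x | (e <= cY x - cX x)%R]))%E).
  by rewrite lee_pmul2l ?lte_fin //; apply: measureU2.
rewrite muleDr //; last by rewrite ge0_adde_def // inE.
apply: leeD; [exact: ce_diff| exact: ce_diff].
Qed.

End ce3.

Section ce4.
Context {d} {T : measurableType d} {R : realType} (P : probability T R).
Variable A : set (set T).
Hypothesis hA : sigma_subfield P A.
Variables X : set T.
Hypotheses (mX : measurable X).
Local Notation cX := (condexp P A \1_X).

Lemma ce_lower e : 0 < e -> P [set x | cX x <= - e] = 0%E.
Proof.
move=> e0; set E := [set x | cX x <= - e].
have AE : A E by exact: (subm_le _ (ce_sub hA mX)).
have mE : measurable E by exact: (proj1 hA).
have iX : P.-integrable E (EFin \o cX) by exact: (integrableS measurableT mE (@subsetT _ _) (ce_int hA mX)).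
have ic : P.-integrable E (EFin \o cst (- e)) by apply: finite_measure_integrable_cst.
have h1 : (\int[P]_(x in E) (cX x)%:E <= \int[P]_(x in E) (cst (- e) x)%:E)%E.
  by apply: le_integral => // x; rewrite inE /E /= lee_fin.
rewrite ce_integral // (_ : (\int[P]_(x in E) (cst (- e)%R x)%:E = (- e)%R%:E * P E)%E) in h1;
  last by rewrite -(integral_cst P mE); apply: eq_integral.
have h2 : (0 <= (- e)%R%:E * P E)%E.
  apply: le_trans h1; exact: measure_ge0.
apply/eqP; rewrite -measure_le0.
have fE : P E \is a fin_num by exact: fin_num_measure.
rewrite -[X in (_ * X)%E](fineK fE) -EFinM lee_fin in h2.
rewrite -[X in (X <= _)%E](fineK fE) lee_fin.
have p0 : 0 <= fine (P E) by apply: fine_ge0; exact: measure_ge0.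
by rewrite mulNr oppr_ge0 pmulr_rle0 in h2.
Qed.

Lemma ce_upper e : 0 < e -> P [set x | 1 + e <= cX x] = 0%E.
Proof.
move=> e0; set E := [set x | 1 + e <= cX x].
have AE : A E by exact: (subm_ge _ (ce_sub hA mX)).
have mE : measurable E by exact: (proj1 hA).
have iX : P.-integrable E (EFin \o cX) by exact: (integrableS measurableT mE (@subsetT _ _) (ce_int hA mX)).
have ic : P.-integrable E (EFin \o cst (1 + e)) by apply: finite_measure_integrable_cst.
have h1 : (\int[P]_(x in E) (cst (1 + e) x)%:E <= \int[P]_(x in E) (cX x)%:E)%E.
  by apply: le_integral => // x; rewrite inE /E /= lee_fin.
rewrite ce_integral // (_ : (\int[P]_(x in E) (cst (1 + e)%R x)%:E = (1 + e)%R%:E * P E)%E) in h1;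
  last by rewrite -(integral_cst P mE); apply: eq_integral.
have h2 : (P (X `&` E) <= P E)%E.
  by apply: le_measure; rewrite ?inE //; exact: measurableI.
have h3 := le_trans h1 h2.
apply/eqP; rewrite -measure_le0.
have fE : P E \is a fin_num by exact: fin_num_measure.
rewrite -[X in (_ * X <= _)%E](fineK fE) -[X in (_ <= X)%E](fineK fE) -EFinM lee_fin in h3.
rewrite -[X in (X <= _)%E](fineK fE) lee_fin.
have p0 : 0 <= fine (P E) by apply: fine_ge0; exact: measure_ge0.
set p := fine (P E) in h3 p0 *.
nra.
Qed.

Lemma ce_gt1 : P [set x | 1 < cX x] = 0%E.
Proof.
have -> : [set x | 1 < cX x] = \bigcup_n [set x | 1 + n.+1%:R^-1 <= cX x].
  apply/seteqP; split => x /=.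
  - move=> hx; have [n hn] := ltr_add_invr hx.
    by exists n => //=; exact: ltW.
  - move=> [n _ hn]; apply: lt_le_trans hn.
    by rewrite ltrDl invr_gt0.
have : P.-negligible (\bigcup_n [set x | 1 + n.+1%:R^-1 <= cX x]).
  apply: negligible_bigcup => n.
  exists [set x | 1 + n.+1%:R^-1 <= cX x]; split => //.
    by apply: (proj1 hA); exact: (subm_ge _ (ce_sub hA mX)).
  by apply: ce_upper; rewrite invr_gt0.
have mU : measurable (\bigcup_n [set x | 1 + n.+1%:R^-1 <= cX x]).
  apply: bigcupT_measurable => n.
  by apply: (proj1 hA); exact: (subm_ge _ (ce_sub hA mX)).
by move/(negligibleP _ mU).
Qed.

Lemma ce_bnd : bnd P cX.
Proof.
rewrite /bnd; apply/eqP; rewrite -measure_le0.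
have m1 : measurable [set x | 1 < cX x].
  by apply: (proj1 hA); exact: (subm_gt _ (ce_sub hA mX)).
have m2 : measurable [set x | cX x <= - 1].
  by apply: (proj1 hA); exact: (subm_le _ (ce_sub hA mX)).
apply: (@le_trans _ _ (P ([set x | 1 < cX x] `|` [set x | cX x <= - 1]))).
  apply: le_measure; rewrite ?inE.
  - by apply: mset_lt; exact: (ce_meas hA mX).
  - exact: measurableU.
  move=> x /=; rewrite ltr_normr => /orP[h|h]; first by left.
  by right; rewrite lerNr ltW.
apply: le_trans (measureU2_le _ _ _) _ => //.
by rewrite ce_gt1 (ce_lower ltr01) adde0.
Qed.

End ce4.

Section approx.
Context {d} {T : measurableType d} {R : realType} (P : probability T R).

Lemma fin_ub k (F : 'I_k -> set T) (E : set T) : measurable E ->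
  (forall m, measurable (F m)) -> E `<=` \bigcup_(m in [set: 'I_k]) F m ->
  (P E <= \sum_(m < k) P (F m))%E.
Proof.
move=> mE mF EF.
pose F' (i : nat) := if insub i is Some m then F m else set0.
have -> : (\sum_(m < k) P (F m) = \sum_(m < k) P (F' m))%E.
  by apply: eq_bigr => m _; rewrite /F' valK.
apply: (@content_subadditive _ _ _ P) => //.
- move=> i _; rewrite /F'; case: insubP => [m _ _|_] //.
- move=> x /EF [m _ Fmx]; rewrite -bigcup_mkord; exists (val m) => //=.
  by rewrite /F' valK.
Qed.

Lemma cip_diff0 (C : nat -> set (set T)) (Xn : nat -> set T) (X : set T) :
  (forall n, sigma_subfield P (C n)) -> (forall n, measurable (Xn n)) ->
  measurable X ->
  (fun n => P (Xn n `\` X)) @ \oo --> 0%E ->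
  (fun n => P (X `\` Xn n)) @ \oo --> 0%E ->
  cvg_in_prob P (fun n x => condexp P (C n) \1_(Xn n) x - condexp P (C n) \1_X x)
    (fun=> 0).
Proof.
move=> hC mXn mX c1 c2 e e0.
apply: (squeeze0 (v := fun n => ((e^-1)%:E * (P (Xn n `\` X) + P (X `\` Xn n)))%E)).
- by move=> n; exact: measure_ge0.
- apply: nearW => n; rewrite lee_pdivlMl //.
  rewrite (_ : [set x | _] = [set x | e <= `|condexp P (C n) \1_(Xn n) x -
       condexp P (C n) \1_X x|]); last by apply/seteqP; split => x /=; rewrite subr0.
  exact: ce_diff_abs.
- rewrite (_ : 0%E = (e^-1)%:E * (0 + 0))%E; last by rewrite adde0 mule0.
  by apply: cvgeZl => //; apply: cvgeD.
Qed.

Lemma cip_approx (C : nat -> set (set T)) (C0 : set (set T)) (Xn : nat -> set T) (X : set T) :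
  (forall n, sigma_subfield P (C n)) -> sigma_subfield P C0 ->
  (forall n, measurable (Xn n)) -> measurable X ->
  strong_cvg P C C0 ->
  (fun n => P (Xn n `\` X)) @ \oo --> 0%E ->
  (fun n => P (X `\` Xn n)) @ \oo --> 0%E ->
  cvg_in_prob P (fun n => condexp P (C n) \1_(Xn n)) (condexp P C0 \1_X).
Proof.
move=> hC hC0 mXn mX hS c1 c2.
apply: (cip_ext (u := fun n x => (condexp P (C n) \1_(Xn n) x - condexp P (C n) \1_X x)
   + condexp P (C n) \1_X x) (f := fun x => 0 + condexp P C0 \1_X x)).
- by move=> n x; rewrite subrK.
- by move=> x; rewrite add0r.
apply: cip_add.
- by move=> n; apply: measurable_funB; exact: ce_meas.
- by move=> n; exact: ce_meas.
- exact: measurable_cst.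
- exact: ce_meas.
- exact: cip_diff0.
- exact: hS.
Qed.

Lemma weak_sets (Bn : nat -> set (set T)) (B0 : set (set T)) (S : set T) :
  (forall n, sigma_subfield P (Bn n)) -> measurable S -> B0 S ->
  weak_cvg P Bn B0 ->
  let Sn n := [set x | 2^-1 < condexp P (Bn n) \1_S x] in
  [/\ forall n, Bn n (Sn n), (fun n => P (Sn n `\` S)) @ \oo --> 0%E &
      (fun n => P (S `\` Sn n)) @ \oo --> 0%E].
Proof.
move=> hB mS BS hW Sn.
have BSn n : Bn n (Sn n) by exact: (subm_gt _ (ce_sub (hB n) mS)).
have mSn n : measurable (Sn n) by exact: (proj1 (hB n)).
have mD n : measurable [set x | 2^-1 <= `|condexp P (Bn n) \1_S x - \1_S x|].
  apply: mset_le; apply: measurable_funB; first exact: ce_meas.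
  exact: measurable_indic.
have hc := hW S BS (2^-1) (ltac:(by rewrite invr_gt0)).
split => //.
- apply: (squeeze0 (v := fun n => P [set x | 2^-1 <= `|condexp P (Bn n) \1_S x - \1_S x|])) => //.
  apply: nearW => n; apply: le_measure; rewrite ?inE //; first exact: measurableD.
  move=> x [/= h1 h2]; rewrite indicE memNset // subr0.
  by rewrite ltW // (lt_le_trans h1) // ler_norm.
- apply: (squeeze0 (v := fun n => P [set x | 2^-1 <= `|condexp P (Bn n) \1_S x - \1_S x|])) => //.
  apply: nearW => n; apply: le_measure; rewrite ?inE //; first exact: measurableD.
  move=> x [h1 /= h2]; rewrite indicE mem_set //.
  move/negP: h2; rewrite -leNgt /= => h2.
  rewrite distrC (le_trans _ (ler_norm _)) //.
  set g := condexp P (Bn n) \1_S x in h2 *.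
  have -> : true%:R = 1 :> R by [].
  lra.
Qed.

End approx.

Lemma inter_cvg {d} {T : measurableType d} {R : realType} (P : probability T R)
  k (Sn : nat -> 'I_k -> set T) (S : nat -> 'I_k -> set T) :
  (forall n m, measurable (Sn n m)) -> (forall n m, measurable (S n m)) ->
  (forall m, (fun n => P (Sn n m `\` S n m)) @ \oo --> 0%E) ->
  (fun n => P ((\bigcap_(m in [set: 'I_k]) Sn n m) `\` (\bigcap_(m in [set: 'I_k]) S n m)))
    @ \oo --> 0%E.
Proof.
move=> mSn mS c.
have mI (F : 'I_k -> set T) : (forall m, measurable (F m)) ->
    measurable (\bigcap_(m in [set: 'I_k]) F m).
  by move=> mF; apply: fin_bigcap_measurable => //; exact: finite_setT.
apply: (squeeze0 (v := fun n => \sum_(m < k) P (Sn n m `\` S n m))%E).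
- by move=> n; exact: measure_ge0.
- apply: nearW => n; apply: (@fin_ub _ _ _ P k (fun m => Sn n m `\` S n m)).
  + by apply: measurableD; apply: mI.
  + by move=> m; apply: measurableD.
  move=> x [hx1 hx2].
  have [[m nm]|H] := pselect (exists m, ~ S n m x).
    by exists m => //; split => //; exact: hx1.
  exfalso; apply: hx2 => m _; apply: contrapT => nS; apply: H; by exists m.
- have h : (fun n => \sum_(m < k) P (Sn n m `\` S n m)) @ \oo -->
      (\sum_(m < k) (0 : \bar R))%E.
    apply: cvg_nnesum => m _; last exact: c.
    by apply: nearW => n; exact: measure_ge0.
  by rewrite big1_eq in h.
Qed.

Lemma prop_aux (d : measure_display) (T : measurableType d)
  (R : realType) (P : probability T R)
  (C : nat -> set (set T)) (I : Type) (B : nat -> I -> set (set T)) :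
  (forall n, sigma_subfield P (C n)) ->
  (forall n i, sigma_subfield P (B n i)) ->
  strong_cvg P C (C 0%N) ->
  (forall i, weak_cvg P (fun n => B n i) (B 0%N i)) ->
  (forall n, (0 < n)%N -> cond_indep P (B n) (C n)) ->
  cond_indep P (B 0%N) (C 0%N).
Proof.
move=> hC hB hS hW hI k j jinj S hS0.
have mS m : measurable (S m) by exact: (proj1 (hB 0%N (j m))).
pose Sn n m := [set x | 2^-1 < condexp P (B n (j m)) \1_(S m) x].
have WS m : [/\ forall n, B n (j m) (Sn n m),
    (fun n => P (Sn n m `\` S m)) @ \oo --> 0%E &
    (fun n => P (S m `\` Sn n m)) @ \oo --> 0%E].
  exact: (weak_sets (fun n => hB n (j m)) (mS m) (hS0 m) (hW (j m))).
have BSn n m : B n (j m) (Sn n m) by have [] := WS m.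
have mSn n m : measurable (Sn n m) by exact: (proj1 (hB n (j m))).
have mI (F : 'I_k -> set T) : (forall m, measurable (F m)) ->
    measurable (\bigcap_(m in [set: 'I_k]) F m).
  by move=> mF; apply: fin_bigcap_measurable => //; exact: finite_setT.
pose SI := \bigcap_(m in [set: 'I_k]) S m.
pose SnI n := \bigcap_(m in [set: 'I_k]) Sn n m.
have cI : cvg_in_prob P (fun n => condexp P (C n) \1_(SnI n)) (condexp P (C 0%N) \1_SI).
  apply: cip_approx => //.
  - by move=> n; apply: mI.
  - exact: mI.
  - by apply: (inter_cvg (S := fun _ => S)) => // m; have [] := WS m.
  - by apply: (inter_cvg (Sn := fun _ => S)) => // m; have [] := WS m.
have cm m : cvg_in_prob P (fun n => condexp P (C n) \1_(Sn n m)) (condexp P (C 0%N) \1_(S m)).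
  by apply: cip_approx => //; have [] := WS m.
have [cp _ _] := cip_prod (a := fun n m => condexp P (C n) \1_(Sn n m))
   (b := fun m => condexp P (C 0%N) \1_(S m))
   (fun n m => ce_meas (hC n) (mSn n m)) (fun m => ce_meas (hC 0%N) (mS m))
   (fun n m => ce_bnd (hC n) (mSn n m)) (fun m => ce_bnd (hC 0%N) (mS m)) cm.
have cI' : cvg_in_prob P (fun n x => \prod_(m < k) condexp P (C n) \1_(Sn n m) x)
    (condexp P (C 0%N) \1_SI).
  apply: (cip_ae (u := fun n => condexp P (C n) \1_(SnI n))) => //.
  - by move=> n; apply: ce_meas => //; apply: mI.
  - by move=> n; apply: mprod => m; apply: ce_meas.
  - by apply: ce_meas => //; apply: mI.
  - by move=> n n0; exact: (hI n n0 k j jinj (Sn n) (BSn n)).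
apply: (cip_uniq (u := fun n x => \prod_(m < k) condexp P (C n) \1_(Sn n m) x)) => //.
- by move=> n; apply: mprod => m; apply: ce_meas.
- by apply: ce_meas => //; apply: mI.
- by apply: mprod => m; apply: ce_meas.
Qed.

Unset Implicit Arguments.
Local Close Scope ring_scope.
Local Close Scope classical_set_scope.

Theorem proposition3p1 (d : measure_display) (T : measurableType d)
  (R : realType) (P : probability T R)
  (C : nat -> set (set T)) (I : Type) (B : nat -> I -> set (set T)) :
  (forall n, sigma_subfield P (C n)) ->
  (forall n i, sigma_subfield P (B n i)) ->
  strong_cvg P C (C 0) ->
  (forall i, weak_cvg P (fun n => B n i) (B 0 i)) ->
  (forall n, (0 < n)%N -> cond_indep P (B n) (C n)) ->
  cond_indep P (B 0) (C 0).
Proof. exact: prop_aux. Qed.
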